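(* Let $\Lambda$ be an admissible temporal logic over a temporal language $\mathcal L$. Then the canonical model $\mathfrak M_c=(W_c,\preccurlyeq_c,S_c,\ell_c)$ of $\Lambda$ is a deterministic weak quasimodel; that is: $\preccurlyeq_c$ is a partial order on $W_c$; each $\ell_c(\Phi)$ satisfies the type conditions (1)–(9); $\Phi\preccurlyeq_c\Psi$ implies $\ell_c(\Phi)\preccurlyeq_T\ell_c(\Psi)$; for every $\Phi\in W_c$ and every $\varphi\to\psi\in\Phi^-$ there is $\Psi\in W_c$ with $\Phi\preccurlyeq_c\Psi$, $\varphi\in\Psi^+$ and $\psi\in\Psi^-$; and $S_c$ is a monotone function $W_c\to W_c$ such that every pair $(\Phi,S_c(\Phi))$ is sensible.
   Context: Formulas are built from $\bot$ and propositional variables using $\wedge,\vee,\to$ and modalities $\circ,\Diamond,\Box,\forall$. A temporal language $\mathcal L_M$ ($M\subseteq\{\Diamond,\Box,\forall\}$) uses $\bot$, variables, $\wedge,\vee,\to,\circ$ and only modalities in $M$. ${\sf ITL}^0_M$ is the logic over $\mathcal L_M$ axiomatized by intuitionistic propositional logic, (N1) $\neg\circ\bot$, (N2) $\circ\varphi\wedge\circ\psi\to\circ(\varphi\wedge\psi)$, (N3) $\circ(\varphi\vee\psi)\to\circ\varphi\vee\circ\psi$, (N4) $\circ(\varphi\to\psi)\to(\circ\varphi\to\circ\psi)$, rules modus ponens and from $\varphi$ infer $\circ\varphi$; plus, if $\Diamond\in M$, axiom $\varphi\vee\circ\Diamond\varphi\to\Diamond\varphi$ and rules from $\varphi\to\psi$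 infer $\Diamond\varphi\to\Diamond\psi$, from $\circ\varphi\to\varphi$ infer $\Diamond\varphi\to\varphi$; plus, if $\forall\in M$, axioms $\forall\varphi\vee\neg\forall\varphi$, $\forall(\varphi\to\psi)\to(\forall\varphi\to\forall\psi)$, $\forall(\varphi\vee\forall\psi)\to\forall\varphi\vee\forall\psi$, $\forall\varphi\to\varphi$, $\forall\varphi\to\forall\forall\varphi$, $\forall\varphi\leftrightarrow\circ\forall\varphi$ and rule from $\varphi$ infer $\forall\varphi$. An admissible temporal logic over $\mathcal L_M$ is a set of $\mathcal L_M$-formulas containing all substitution instances of the axioms of ${\sf ITL}^0_M$ and closed under its rules. $\Gamma\vdash\Delta$ means there are finite $\Gamma'\subseteq\Gamma$, $\Delta'\subseteq\Delta$ with $\bigwedge\Gamma'\to\bigvee\Delta'\in\Lambda$. A prime $\mathcal L$-type is a pair $\Phi=(\Phi^+,\Phi^-)$ of sets of $\mathcal L$-formulas with $\Phi^+\cup\Phi^-=\mathcal L$ and $\Phi^+\not\vdash\Phi^-$. For pairs, $\Phi\preccurlyeq_T\Psi$ means $\Phi^+\subseteq\Psi^+$ and $\Psi^-\subseteq\Phi^-$. Type conditions: (1) $\Phi^-\cap\Phi^+=\varnothing$; (2) $\bot\notin\Phi^+$; (3) $\varphi\wedge\psi\in\Phi^+\Rightarrow\varphi,\psi\in\Phi^+$; (4) $\varphi\wedge\psi\in\Phi^-\Rightarrow\varphi\in\Phi^-$ or $\psi\in\Phi^-$; (5) $\varphi\vee\psi\in\Phi^+\Rightarrow\varphi\in\Phi^+$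 or $\psi\in\Phi^+$; (6) $\varphi\vee\psi\in\Phi^-\Rightarrow\varphi,\psi\in\Phi^-$; (7) $\varphi\to\psi\in\Phi^+\Rightarrow\varphi\in\Phi^-$ or $\psi\in\Phi^+$; (8) $\varphi\to\psi\in\Phi^-\Rightarrow\psi\in\Phi^-$; (9) $\Diamond\varphi\in\Phi^-\Rightarrow\varphi\in\Phi^-$. A pair $(\Phi,\Psi)$ is sensible if: $\circ\varphi\in\Phi^+\Rightarrow\varphi\in\Psi^+$; $\circ\varphi\in\Phi^-\Rightarrow\varphi\in\Psi^-$; $\Diamond\varphi\in\Phi^+\Rightarrow\varphi\in\Phi^+$ or $\Diamond\varphi\in\Psi^+$; $\Diamond\varphi\in\Phi^-\Rightarrow\Diamond\varphi\in\Psi^-$; $\forall\varphi\in\Phi^+\Leftrightarrow\forall\varphi\in\Psi^+$; $\forall\varphi\in\Phi^-\Leftrightarrow\forall\varphi\in\Psi^-$. The canonical model: $W_c$ is the set of prime $\mathcal L$-types, $\preccurlyeq_c$ is $\preccurlyeq_T$ restricted to $W_c$, $\Phi\mathrel{S_c}\Psi$ iff $(\Phi,\Psi)$ is sensible, and $\ell_c$ is the identity. *)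

(* Defs.v *)
From Stdlib Require Import List.
Import ListNotations.

Inductive form : Type :=
| Bot : form
| Var : nat -> form
| And : form -> form -> form
| Or  : form -> form -> form
| Imp : form -> form -> form
| Next : form -> form
| Dia : form -> form
| Box : form -> form
| All : form -> form.

Definition Neg (f : form) : form := Imp f Bot.
Definition Top : form := Imp Bot Bot.
Definition Iff (f g : form) : form := And (Imp f g) (Imp g f).

Inductive modality : Type := MDia | MBox | MAll.

Fixpoint inL (M : modality -> bool) (f : form) : Prop :=
  match f with
  | Bot => True
  | Var _ => True
  | And a b | Or a b | Imp a b => inL M a /\ inL M b
  | Next a => inL M a
  | Dia a => M MDia = true /\ inL M a
  | Box a => M MBox = true /\ inL M a
  | All a => M MAll = true /\ inL M a
  end.

Definition ipc_axiom (a b c : form) (t : form) : Prop :=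
  t = Imp a (Imp b a) \/
  t = Imp (Imp a (Imp b c)) (Imp (Imp a b) (Imp a c)) \/
  t = Imp (And a b) a \/
  t = Imp (And a b) b \/
  t = Imp a (Imp b (And a b)) \/
  t = Imp a (Or a b) \/
  t = Imp b (Or a b) \/
  t = Imp (Imp a c) (Imp (Imp b c) (Imp (Or a b) c)) \/
  t = Imp Bot a.

Definition next_axiom (a b : form) (t : form) : Prop :=
  t = Neg (Next Bot) \/
  t = Imp (And (Next a) (Next b)) (Next (And a b)) \/
  t = Imp (Next (Or a b)) (Or (Next a) (Next b)) \/
  t = Imp (Next (Imp a b)) (Imp (Next a) (Next b)).

Definition dia_axiom (a : form) (t : form) : Prop :=
  t = Imp (Or a (Next (Dia a))) (Dia a).

Definition all_axiom (a b : form) (t : form) : Prop :=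
  t = Or (All a) (Neg (All a)) \/
  t = Imp (All (Imp a b)) (Imp (All a) (All b)) \/
  t = Imp (All (Or a (All b))) (Or (All a) (All b)) \/
  t = Imp (All a) a \/
  t = Imp (All a) (All (All a)) \/
  t = Iff (All a) (Next (All a)).

Definition itl0_axiom (M : modality -> bool) (t : form) : Prop :=
  exists a b c, inL M a /\ inL M b /\ inL M c /\
    (ipc_axiom a b c t \/ next_axiom a b t \/
     (M MDia = true /\ dia_axiom a t) \/
     (M MAll = true /\ all_axiom a b t)).

Definition admissible (M : modality -> bool) (Lam : form -> Prop) : Prop :=
  (forall f, Lam f -> inL M f) /\
  (forall t, itl0_axiom M t -> Lam t) /\
  (forall a b, Lam a -> Lam (Imp a b) -> Lam b) /\
  (forall a, Lam a -> Lam (Next a)) /\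
  (M MDia = true ->
     (forall a b, Lam (Imp a b) -> Lam (Imp (Dia a) (Dia b))) /\
     (forall a, Lam (Imp (Next a) a) -> Lam (Imp (Dia a) a))) /\
  (M MAll = true -> forall a, Lam a -> Lam (All a)).

Fixpoint bigAnd (l : list form) : form :=
  match l with [] => Top | x :: r => And x (bigAnd r) end.
Fixpoint bigOr (l : list form) : form :=
  match l with [] => Bot | x :: r => Or x (bigOr r) end.

Definition derives (Lam : form -> Prop) (G D : form -> Prop) : Prop :=
  exists (g d : list form),
    (forall x, In x g -> G x) /\ (forall x, In x d -> D x) /\
    Lam (Imp (bigAnd g) (bigOr d)).

Record ptype : Type := mkT { pos : form -> Prop; neg : form -> Prop }.

Definition prime_type (M : modality -> bool) (Lam : form -> Prop) (P : ptype) : Prop :=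
  (forall f, pos P f \/ neg P f <-> inL M f) /\ ~ derives Lam (pos P) (neg P).

Definition le_T (P Q : ptype) : Prop :=
  (forall f, pos P f -> pos Q f) /\ (forall f, neg Q f -> neg P f).

Definition type_conditions (P : ptype) : Prop :=
  (forall f, ~ (neg P f /\ pos P f)) /\
  ~ pos P Bot /\
  (forall a b, pos P (And a b) -> pos P a /\ pos P b) /\
  (forall a b, neg P (And a b) -> neg P a \/ neg P b) /\
  (forall a b, pos P (Or a b) -> pos P a \/ pos P b) /\
  (forall a b, neg P (Or a b) -> neg P a /\ neg P b) /\
  (forall a b, pos P (Imp a b) -> neg P a \/ pos P b) /\
  (forall a b, neg P (Imp a b) -> neg P b) /\
  (forall a, neg P (Dia a) -> neg P a).

Definition sensible (P Q : ptype) : Prop :=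
  (forall a, pos P (Next a) -> pos Q a) /\
  (forall a, neg P (Next a) -> neg Q a) /\
  (forall a, pos P (Dia a) -> pos P a \/ pos Q (Dia a)) /\
  (forall a, neg P (Dia a) -> neg Q (Dia a)) /\
  (forall a, pos P (All a) <-> pos Q (All a)) /\
  (forall a, neg P (All a) <-> neg Q (All a)).

Definition Wc (M : modality -> bool) (Lam : form -> Prop) : Type :=
  { P : ptype | prime_type M Lam P }.

Definition le_c {M Lam} (P Q : Wc M Lam) : Prop := le_T (proj1_sig P) (proj1_sig Q).
Definition S_c {M Lam} (P Q : Wc M Lam) : Prop := sensible (proj1_sig P) (proj1_sig Q).
Definition ell_c {M Lam} (P : Wc M Lam) : ptype := proj1_sig P.

(* Main.v *)
Require Import Defs.
From Stdlib Require Import List Arith Lia Classical FunctionalExtensionality PropExtensionality ProofIrrelevance.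
From Stdlib Require Cantor.
Import ListNotations.

Section ITL.
Variable M : modality -> bool.
Variable Lam : form -> Prop.
Hypothesis HLam : admissible M Lam.

Local Notation L := (inL M).

Lemma lam_L f : Lam f -> L f. Proof. destruct HLam as [H _]; auto. Qed.
Lemma lam_ax t : itl0_axiom M t -> Lam t. Proof. destruct HLam as [_ [H _]]; auto. Qed.
Lemma lam_mp a b : Lam a -> Lam (Imp a b) -> Lam b.
Proof. destruct HLam as [_ [_ [H _]]]; eauto. Qed.
Lemma lam_nec a : Lam a -> Lam (Next a).
Proof. destruct HLam as [_ [_ [_ [H _]]]]; eauto. Qed.
Lemma lam_dia_mono a b : M MDia = true -> Lam (Imp a b) -> Lam (Imp (Dia a) (Dia b)).
Proof. destruct HLam as [_ [_ [_ [_ [H _]]]]]; intros; apply H; auto. Qed.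
Lemma lam_dia_ind a : M MDia = true -> Lam (Imp (Next a) a) -> Lam (Imp (Dia a) a).
Proof. destruct HLam as [_ [_ [_ [_ [H _]]]]]; intros; apply H; auto. Qed.

Ltac mkax a b := apply lam_ax; exists a, b, Bot;
  refine (conj _ (conj _ (conj _ _))); [assumption|assumption|exact I|].
Ltac mkax3 a b c := apply lam_ax; exists a, b, c;
  refine (conj _ (conj _ (conj _ _))); [assumption|assumption|assumption|].
Ltac pick n := lazymatch n with 0 => first [left; reflexivity | reflexivity] | S ?k => right; pick k end.

Lemma axK a b : L a -> L b -> Lam (Imp a (Imp b a)).
Proof. intros; mkax a b; left; unfold ipc_axiom; pick 0. Qed.
Lemma axS a b c : L a -> L b -> L c ->
  Lam (Imp (Imp a (Imp b c)) (Imp (Imp a b) (Imp a c))).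
Proof. intros; mkax3 a b c; left; unfold ipc_axiom; pick 1. Qed.
Lemma axAndE1 a b : L a -> L b -> Lam (Imp (And a b) a).
Proof. intros; mkax a b; left; unfold ipc_axiom; pick 2. Qed.
Lemma axAndE2 a b : L a -> L b -> Lam (Imp (And a b) b).
Proof. intros; mkax a b; left; unfold ipc_axiom; pick 3. Qed.
Lemma axAndI a b : L a -> L b -> Lam (Imp a (Imp b (And a b))).
Proof. intros; mkax a b; left; unfold ipc_axiom; pick 4. Qed.
Lemma axOrI1 a b : L a -> L b -> Lam (Imp a (Or a b)).
Proof. intros; mkax a b; left; unfold ipc_axiom; pick 5. Qed.
Lemma axOrI2 a b : L a -> L b -> Lam (Imp b (Or a b)).
Proof. intros; mkax a b; left; unfold ipc_axiom; pick 6. Qed.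
Lemma axOrE a b c : L a -> L b -> L c ->
  Lam (Imp (Imp a c) (Imp (Imp b c) (Imp (Or a b) c))).
Proof. intros; mkax3 a b c; left; unfold ipc_axiom; pick 7. Qed.
Lemma axBot a : L a -> Lam (Imp Bot a).
Proof. intros; apply lam_ax; exists a, a, Bot;
  refine (conj _ (conj _ (conj _ _))); [assumption|assumption|exact I|].
  left; unfold ipc_axiom; pick 8. Qed.
Lemma axN1 : Lam (Neg (Next Bot)).
Proof. apply lam_ax; exists Bot, Bot, Bot; refine (conj I (conj I (conj I _))).
  right; left; unfold next_axiom; pick 0. Qed.
Lemma axN2 a b : L a -> L b -> Lam (Imp (And (Next a) (Next b)) (Next (And a b))).
Proof. intros; mkax a b; right; left; unfold next_axiom; pick 1. Qed.
Lemma axN3 a b : L a -> L b -> Lam (Imp (Next (Or a b)) (Or (Next a) (Next b))).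
Proof. intros; mkax a b; right; left; unfold next_axiom; pick 2. Qed.
Lemma axN4 a b : L a -> L b -> Lam (Imp (Next (Imp a b)) (Imp (Next a) (Next b))).
Proof. intros; mkax a b; right; left; unfold next_axiom; pick 3. Qed.
Lemma axDia a : M MDia = true -> L a -> Lam (Imp (Or a (Next (Dia a))) (Dia a)).
Proof. intros; apply lam_ax; exists a, a, Bot;
  refine (conj _ (conj _ (conj _ _))); [assumption|assumption|exact I|].
  right; right; left; split; [assumption|reflexivity]. Qed.
Lemma axAllIff a : M MAll = true -> L a -> Lam (Iff (All a) (Next (All a))).
Proof. intros; apply lam_ax; exists a, a, Bot;
  refine (conj _ (conj _ (conj _ _))); [assumption|assumption|exact I|].
  right; right; right; split; [assumption|]. unfold all_axiom; pick 5. Qed.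

Lemma lam_top : Lam Top.
Proof. apply axBot; exact I. Qed.

Inductive Thm (G : list form) : form -> Prop :=
| T_hyp f : In f G -> Thm G f
| T_lam f : Lam f -> Thm G f
| T_mp a b : Thm G a -> Thm G (Imp a b) -> Thm G b.

Definition Lall (l : list form) := forall x, In x l -> L x.

Lemma Lall_nil : Lall [].
Proof. intros x []. Qed.
Lemma Lall_cons x l : L x -> Lall l -> Lall (x :: l).
Proof. intros Hx Hl y [<-|Hy]; auto. Qed.
Lemma Lall_incl l l' : incl l l' -> Lall l' -> Lall l.
Proof. intros H H' x Hx; auto. Qed.
Lemma Lall_app l l' : Lall l -> Lall l' -> Lall (l ++ l').
Proof. intros H H' x Hx; apply in_app_iff in Hx; destruct Hx; auto. Qed.

Lemma thm_L G f : Lall G -> Thm G f -> L f.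
Proof. intros HG H; induction H; [apply HG; auto | apply lam_L; auto | simpl in IHThm2; tauto]. Qed.

Lemma thm_weak G G' f : incl G G' -> Thm G f -> Thm G' f.
Proof. intros HI H; induction H; [apply T_hyp; apply HI; auto | apply T_lam; auto | apply T_mp with a; auto]. Qed.

Lemma thm_subst G G' f : (forall x, In x G -> Thm G' x) -> Thm G f -> Thm G' f.
Proof. intros HI H; induction H; [auto | apply T_lam; auto | apply T_mp with a; auto]. Qed.

Lemma lam_app G a b : Lam (Imp a b) -> Thm G a -> Thm G b.
Proof. intros; eapply T_mp; [eassumption | apply T_lam; auto]. Qed.

Lemma thm_II G a : L a -> Thm G (Imp a a).
Proof.
  intro Ha. assert (Haa : L (Imp a a)) by (simpl; auto).
  apply T_mp with (Imp a (Imp a a)); [apply T_lam, axK; auto|].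
  apply T_mp with (Imp a (Imp (Imp a a) a)); [apply T_lam, axK; auto|].
  apply T_lam, axS; auto.
Qed.

Lemma deduction G a b : Lall G -> L a -> Thm (a :: G) b -> Thm G (Imp a b).
Proof.
  intros HG Ha H. assert (HaG : Lall (a :: G)) by (apply Lall_cons; auto).
  induction H as [f Hf | f Hf | x y Hx IHx Hxy IHxy].
  - destruct Hf as [<- | Hf]. apply thm_II; auto.
    apply T_mp with f; [apply T_hyp; auto | apply T_lam; apply axK; auto].
  - apply T_mp with f; [apply T_lam; auto | apply T_lam; apply axK; auto using lam_L].
  - pose proof (thm_L _ _ HaG Hx). pose proof (thm_L _ _ HaG Hxy). simpl in *.
    apply T_mp with (Imp a x); auto. apply T_mp with (Imp a (Imp x y)); auto.
    apply T_lam, axS; tauto.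
Qed.

Lemma thm_nil f : Thm [] f -> Lam f.
Proof. induction 1; [contradiction | auto | apply lam_mp with a; auto]. Qed.

Lemma thm_andI G a b : Lall G -> Thm G a -> Thm G b -> Thm G (And a b).
Proof.
  intros HG Ha Hb. apply T_mp with b; auto. apply T_mp with a; auto.
  apply T_lam, axAndI; eapply thm_L; eauto.
Qed.
Lemma thm_andE1 G a b : Lall G -> Thm G (And a b) -> Thm G a.
Proof. intros HG H. pose proof (thm_L _ _ HG H) as [? ?]. apply lam_app with (And a b); [apply axAndE1|]; eauto. Qed.
Lemma thm_andE2 G a b : Lall G -> Thm G (And a b) -> Thm G b.
Proof. intros HG H. pose proof (thm_L _ _ HG H) as [? ?]. apply lam_app with (And a b); [apply axAndE2|]; eauto. Qed.
Lemma thm_orI1 G a b : Lall G -> L b -> Thm G a -> Thm G (Or a b).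
Proof. intros HG Hb H. apply lam_app with a; [apply axOrI1|]; eauto. eapply thm_L; eauto. Qed.
Lemma thm_orI2 G a b : Lall G -> L a -> Thm G b -> Thm G (Or a b).
Proof. intros HG Hb H. apply lam_app with b; [apply axOrI2|]; eauto. eapply thm_L; eauto. Qed.
Lemma thm_orE G a b c : Lall G -> Thm G (Or a b) -> Thm (a :: G) c -> Thm (b :: G) c -> Thm G c.
Proof.
  intros HG H Ha Hb. pose proof (thm_L _ _ HG H) as [La Lb].
  assert (Lc : L c) by (eapply thm_L; [|exact Ha]; apply Lall_cons; auto).
  apply T_mp with (Or a b); auto.
  apply T_mp with (Imp b c); [apply deduction; auto|].
  apply T_mp with (Imp a c); [apply deduction; auto|].
  apply T_lam, axOrE; auto.
Qed.
Lemma thm_botE G c : L c -> Thm G Bot -> Thm G c.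
Proof. intros Hc H; apply lam_app with Bot; [apply axBot|]; eauto. Qed.

Lemma L_bigAnd g : Lall g -> L (bigAnd g).
Proof. induction g; intro H; simpl; [split; exact I|].
  split; [apply H; left; auto | apply IHg; intros x Hx; apply H; right; auto]. Qed.
Lemma L_bigOr d : Lall d -> L (bigOr d).
Proof. induction d; intro H; simpl; [exact I|].
  split; [apply H; left; auto | apply IHd; intros x Hx; apply H; right; auto]. Qed.
Lemma Lall_bigOr d : L (bigOr d) -> Lall d.
Proof. induction d; intros H x Hx; [destruct Hx|]. simpl in H; destruct H.
  destruct Hx as [<-|Hx]; auto. apply IHd; auto. Qed.

Lemma thm_bigAnd_intro G g : Lall G -> (forall x, In x g -> Thm G x) -> Thm G (bigAnd g).
Proof. intro HG; induction g; intro H; simpl; [apply T_lam, lam_top|].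
  apply thm_andI; auto. apply H; left; auto. apply IHg; intros; apply H; right; auto. Qed.
Lemma thm_bigAnd_elim G g x : Lall G -> Thm G (bigAnd g) -> In x g -> Thm G x.
Proof. intro HG; induction g; simpl; [contradiction|].
  intros H [<-|Hx]; [eapply thm_andE1; eauto | apply IHg; auto; eapply thm_andE2; eauto]. Qed.
Lemma thm_bigOr_intro G d x : Lall G -> Lall d -> In x d -> Thm G x -> Thm G (bigOr d).
Proof. intro HG; induction d; simpl; [contradiction|]. intros Hd Hx H.
  destruct Hx as [<-|Hx].
  - apply thm_orI1; auto. apply L_bigOr; intros y Hy; apply Hd; right; auto.
  - apply thm_orI2; auto. apply Hd; left; auto. apply IHd; auto. intros y Hy; apply Hd; right; auto. Qed.
Lemma thm_bigOr_elim d : forall G c, Lall G -> L c -> Thm G (bigOr d) ->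
  (forall x, In x d -> Thm (x :: G) c) -> Thm G c.
Proof. induction d; intros G c HG Hc H Hx; simpl in *.
  - apply thm_botE; auto.
  - pose proof (thm_L _ _ HG H) as [La Ld].
    apply thm_orE with a (bigOr d); auto.
    apply IHd; auto. apply Lall_cons; auto. apply T_hyp; left; auto.
    intros x Hin. apply thm_weak with (x :: G); [intros y [<-|Hy]; simpl; auto|]. auto.
Qed.

Definition DT (G D : form -> Prop) := exists g d, (forall x, In x g -> G x) /\
  (forall x, In x d -> D x) /\ Thm g (bigOr d).

Lemma derives_DT G D : (forall f, G f -> L f) -> derives Lam G D -> DT G D.
Proof. intros HG (g & d & Hg & Hd & H). exists g, d; split; [|split]; auto.
  eapply lam_app; [exact H|]. apply thm_bigAnd_intro. intros x Hx; auto.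
  intros; apply T_hyp; auto. Qed.

Lemma DT_derives G D : (forall f, G f -> L f) -> (forall f, D f -> L f) -> DT G D -> derives Lam G D.
Proof. intros HG HD (g & d & Hg & Hd & H). exists g, d; split; [|split]; auto.
  assert (Lg : Lall g) by (intros x Hx; auto).
  assert (Ld : Lall d) by (intros x Hx; auto).
  apply thm_nil, deduction; [apply Lall_nil | apply L_bigAnd; auto|].
  apply thm_subst with g; auto. intros x Hx.
  apply thm_bigAnd_elim with g; auto. apply Lall_cons; [apply L_bigAnd; auto| apply Lall_nil].
  apply T_hyp; left; auto. Qed.


Ltac inl := let x := fresh in let Hx := fresh in intros x Hx;
  repeat (destruct Hx as [<-|Hx]; [assumption|]); destruct Hx.
Local Hint Extern 1 => match goal with |- forall x, In x _ -> _ => inl end : core.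

Section Prime.
Variable P : ptype.
Hypothesis HP : prime_type M Lam P.

Lemma pos_L f : pos P f -> L f. Proof. intro; apply (proj1 HP f); auto. Qed.
Lemma neg_L f : neg P f -> L f. Proof. intro; apply (proj1 HP f); auto. Qed.
Lemma cover f : L f -> pos P f \/ neg P f. Proof. apply (proj1 HP f). Qed.
Lemma Lall_pos g : (forall x, In x g -> pos P x) -> Lall g.
Proof. intros H x Hx; apply pos_L; auto. Qed.

Lemma contra g d : (forall x, In x g -> pos P x) -> (forall x, In x d -> neg P x) ->
  Thm g (bigOr d) -> False.
Proof. intros Hg Hd H. apply (proj2 HP). apply DT_derives; [exact pos_L | exact neg_L|].
  exists g, d; auto. Qed.

Lemma contra1 g b : (forall x, In x g -> pos P x) -> neg P b -> Thm g b -> False.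
Proof. intros Hg Hb H. apply (contra g [b]); [auto | inl |].
  apply thm_bigOr_intro with b; [apply Lall_pos; auto | apply Lall_cons; [apply neg_L; auto| apply Lall_nil] | left; auto | auto]. Qed.

Lemma pos_of_thm g f : (forall x, In x g -> pos P x) -> L f -> Thm g f -> pos P f.
Proof. intros Hg Hf H. destruct (cover f Hf); auto. exfalso; apply (contra1 g f); auto. Qed.

Lemma disj f : pos P f -> neg P f -> False.
Proof. intros H1 H2. apply (contra1 [f] f); [intros x [<-|[]]; auto | auto | apply T_hyp; left; auto]. Qed.

Lemma prime_tc : type_conditions P.
Proof.
  assert (Ls : forall a, pos P a -> Lall [a]) by (intros a Ha; apply Lall_pos; inl).
  split; [intros f [H1 H2]; eapply disj; eauto|].
  split; [intro H; apply (contra [Bot] []); [auto | intros x [] | apply T_hyp; left; auto]|].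
  split.
  { intros a b H. pose proof (pos_L _ H) as [La Lb]. split.
    - apply pos_of_thm with [And a b]; auto. apply thm_andE1 with b; auto. apply T_hyp; left; auto.
    - apply pos_of_thm with [And a b]; auto. apply thm_andE2 with a; auto. apply T_hyp; left; auto. }
  split.
  { intros a b H. pose proof (neg_L _ H) as [La Lb].
    destruct (cover a La); auto. destruct (cover b Lb); auto. exfalso.
    apply (contra1 [a; b] (And a b)); [inl | auto |].
    apply thm_andI; [apply Lall_pos; intros x [<-|[<-|[]]]; auto| |]; apply T_hyp; simpl; auto. }
  split.
  { intros a b H. pose proof (pos_L _ H) as [La Lb].
    destruct (cover a La); auto. destruct (cover b Lb); auto. exfalso.
    apply (contra [Or a b] [a; b]); [inl | inl |].
    assert (Ld : Lall [a; b]) by (repeat apply Lall_cons; auto; apply Lall_nil).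
    apply thm_orE with a b; auto. apply T_hyp; left; auto.
    apply thm_bigOr_intro with a; auto. apply Lall_cons; auto. simpl; auto. apply T_hyp; left; auto.
    apply thm_bigOr_intro with b; auto. apply Lall_cons; auto. simpl; auto. apply T_hyp; left; auto. }
  split.
  { intros a b H. pose proof (neg_L _ H) as [La Lb]. split.
    - destruct (cover a La); auto. exfalso. apply (contra1 [a] (Or a b)); auto.
      apply thm_orI1; auto. apply T_hyp; left; auto.
    - destruct (cover b Lb); auto. exfalso. apply (contra1 [b] (Or a b)); auto.
      apply thm_orI2; auto. apply T_hyp; left; auto. }
  split.
  { intros a b H. pose proof (pos_L _ H) as [La Lb].
    destruct (cover a La); auto. right.
    apply pos_of_thm with [Imp a b; a]; [inl | auto |].
    apply T_mp with a; apply T_hyp; simpl; auto. }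
  split.
  { intros a b H. pose proof (neg_L _ H) as [La Lb].
    destruct (cover b Lb); auto. exfalso. apply (contra1 [b] (Imp a b)); auto.
    apply lam_app with b; [apply axK; auto | apply T_hyp; left; auto]. }
  { intros a H. pose proof (neg_L _ H) as [HD La].
    destruct (cover a La); auto. exfalso. apply (contra1 [a] (Dia a)); auto.
    apply lam_app with (Or a (Next (Dia a))); [apply axDia; auto|].
    apply thm_orI1; auto. simpl; auto. apply T_hyp; left; auto. }
Qed.

End Prime.

Lemma split_list (A : form -> Prop) e l : (forall x, In x l -> A x \/ x = e) ->
  exists l', (forall x, In x l' -> A x) /\ incl l (e :: l').
Proof.
  induction l as [|y r IH]; intro H.
  - exists []; split; [intros x []| intros x []].
  - destruct IH as [l' [H1 H2]]. intros; apply H; right; auto.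
    destruct (H y (or_introl eq_refl)) as [Hy|Hy].
    + exists (y :: l'); split. intros x [<-|Hx]; auto.
      intros x [<-|Hx]; simpl; auto. apply H2 in Hx; simpl in Hx; tauto.
    + exists l'; split; auto. intros x [<-|Hx]; simpl; auto. apply H2; auto.
Qed.

Lemma DT_mono (G D G' D' : form -> Prop) : (forall f, G f -> G' f) -> (forall f, D f -> D' f) ->
  DT G D -> DT G' D'.
Proof. intros HG HD (g & d & H1 & H2 & H3). exists g, d; auto. Qed.

Lemma DT_cut (G D : form -> Prop) e : (forall f, G f -> L f) -> (forall f, D f -> L f) -> L e ->
  DT (fun x => G x \/ x = e) D -> DT G (fun x => D x \/ x = e) -> DT G D.
Proof.
  intros HG HD He (g1 & d1 & Hg1 & Hd1 & T1) (g2 & d2 & Hg2 & Hd2 & T2).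
  destruct (split_list G e g1 Hg1) as [g1' [Hg1' Ig1]].
  destruct (split_list D e d2 Hd2) as [d2' [Hd2' Id2]].
  exists (g1' ++ g2), (d1 ++ d2'). split; [|split].
  - intros x Hx; apply in_app_iff in Hx; destruct Hx; auto.
  - intros x Hx; apply in_app_iff in Hx; destruct Hx; auto.
  - assert (Lg : Lall (g1' ++ g2)) by (intros x Hx; apply in_app_iff in Hx; destruct Hx; auto).
    assert (Ld : Lall (d1 ++ d2')) by (intros x Hx; apply in_app_iff in Hx; destruct Hx; auto).
    assert (Ld1 : Lall d1) by (intros x Hx; auto).
    apply thm_bigOr_elim with d2; auto. apply L_bigOr; auto.
    + apply thm_weak with g2; auto. intros x Hx; apply in_app_iff; auto.
    + intros x Hx. assert (Lx : L x) by (apply Id2 in Hx; destruct Hx as [<-|Hx]; auto).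
      apply Id2 in Hx. destruct Hx as [<-|Hx].
      * apply thm_bigOr_elim with d1; auto. apply Lall_cons; auto. apply L_bigOr; auto.
        apply thm_weak with g1; auto.
        intros y Hy. apply Ig1 in Hy. destruct Hy as [<-|Hy]; simpl; auto.
        right; apply in_app_iff; auto.
        intros y Hy. apply thm_bigOr_intro with y; auto.
        repeat apply Lall_cons; auto. apply in_app_iff; auto. apply T_hyp; left; auto.
      * apply thm_bigOr_intro with x; auto. apply Lall_cons; auto.
        apply in_app_iff; auto. apply T_hyp; left; auto.
Qed.

Fixpoint lev (n : nat) : list form :=
  match n with
  | 0 => []
  | S n => lev n ++ Bot :: Var n ::
      flat_map (fun x => flat_map (fun y => [And x y; Or x y; Imp x y]) (lev n)) (lev n) ++
      flat_map (fun x => [Next x; Dia x; Box x; All x]) (lev n)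
  end.

Lemma lev_mono n m : n <= m -> incl (lev n) (lev m).
Proof. induction 1; intros x Hx; auto. simpl. apply in_app_iff; left; auto. Qed.

Lemma lev_bin n a b (op : form -> form -> form) :
  In (op a b) [And a b; Or a b; Imp a b] -> In a (lev n) -> In b (lev n) -> In (op a b) (lev (S n)).
Proof. intros Hop Ha Hb. simpl. apply in_app_iff; right. right; right.
  apply in_app_iff; left. apply in_flat_map. exists a; split; auto.
  apply in_flat_map. exists b; split; auto. Qed.

Lemma lev_un n a (op : form -> form) :
  In (op a) [Next a; Dia a; Box a; All a] -> In a (lev n) -> In (op a) (lev (S n)).
Proof. intros Hop Ha. simpl. apply in_app_iff; right. right; right.
  apply in_app_iff; right. apply in_flat_map. exists a; split; auto. Qed.

Lemma lev_all f : exists n, In f (lev n).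
Proof.
  induction f.
  1: exists 1; simpl; auto.
  1: exists (S n); simpl; apply in_app_iff; right; simpl; auto.
  all: try (destruct IHf1 as [n1 H1]; destruct IHf2 as [n2 H2]; exists (S (max n1 n2));
    apply lev_bin; [simpl; tauto | eapply lev_mono; [|exact H1]; lia
                    | eapply lev_mono; [|exact H2]; lia]).
  all: destruct IHf as [n H]; exists (S n); apply lev_un; [simpl; tauto | auto].
Qed.

Definition enum (k : nat) : form :=
  let p := Cantor.of_nat k in nth (fst p) (lev (snd p)) Bot.

Lemma enum_surj f : exists k, enum k = f.
Proof.
  destruct (lev_all f) as [n Hn]. destruct (In_nth _ _ Bot Hn) as [i [_ Hi]].
  exists (Cantor.to_nat (i, n)). unfold enum. rewrite Cantor.cancel_of_to. simpl; auto.
Qed.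

Section Lind.
Variables G0 D0 : form -> Prop.
Hypothesis HG0 : forall f, G0 f -> L f.
Hypothesis HD0 : forall f, D0 f -> L f.
Hypothesis Hcons : ~ DT G0 D0.

Fixpoint stage (n : nat) : ptype :=
  match n with
  | 0 => mkT G0 D0
  | S n => let P := stage n in let e := enum n in
     mkT (fun f => pos P f \/ (f = e /\ L e /\ ~ DT (fun x => pos P x \/ x = e) (neg P)))
         (fun f => neg P f \/ (f = e /\ L e /\ DT (fun x => pos P x \/ x = e) (neg P)))
  end.

Lemma stage_L n : (forall f, pos (stage n) f -> L f) /\ (forall f, neg (stage n) f -> L f).
Proof. induction n; simpl; [auto|]. destruct IHn as [H1 H2].
  split; intros f [Hf|(-> & He & _)]; auto. Qed.

Lemma stage_mono n m : n <= m ->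
  (forall f, pos (stage n) f -> pos (stage m) f) /\ (forall f, neg (stage n) f -> neg (stage m) f).
Proof. induction 1; [auto|]. destruct IHle as [H1 H2]. simpl. split; intros; left; auto. Qed.

Lemma stage_cons n : ~ DT (pos (stage n)) (neg (stage n)).
Proof.
  induction n; [exact Hcons|]. simpl. intro H.
  destruct (stage_L n) as [L1 L2].
  destruct (classic (L (enum n))) as [He|He].
  - destruct (classic (DT (fun x => pos (stage n) x \/ x = enum n) (neg (stage n)))) as [Hd|Hd].
    + apply IHn. apply DT_cut with (enum n); auto.
      revert H; apply DT_mono.
      * intros f [Hf|(_ & _ & C)]; [auto| contradiction].
      * intros f [Hf|(-> & _ & _)]; auto.
    + apply Hd. revert H; apply DT_mono.
      * intros f [Hf|(-> & _ & _)]; auto.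
      * intros f [Hf|(_ & _ & C)]; [auto| contradiction].
  - apply IHn. revert H; apply DT_mono.
    * intros f [Hf|(-> & C & _)]; [auto| contradiction].
    * intros f [Hf|(-> & C & _)]; [auto| contradiction].
Qed.

Lemma bound_list (F : nat -> form -> Prop) : (forall n m f, n <= m -> F n f -> F m f) ->
  forall l, (forall x, In x l -> exists n, F n x) -> exists N, forall x, In x l -> F N x.
Proof.
  intros HF l; induction l as [|a r IH]; intro H.
  - exists 0; intros x [].
  - destruct (H a (or_introl eq_refl)) as [n0 Hn0].
    destruct IH as [N HN]. intros; apply H; right; auto.
    exists (max n0 N). intros x [<-|Hx].
    + apply HF with n0; auto; lia.
    + apply HF with N; auto; lia.
Qed.

Definition limT : ptype := mkT (fun f => exists n, pos (stage n) f) (fun f => exists n, neg (stage n) f).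

Lemma lindenbaum : prime_type M Lam limT /\ (forall f, G0 f -> pos limT f) /\ (forall f, D0 f -> neg limT f).
Proof.
  split; [split|split; intros f Hf; exists 0; simpl; auto].
  - intro f; split.
    + intros [[n Hn]|[n Hn]]; [apply (proj1 (stage_L n)) | apply (proj2 (stage_L n))]; auto.
    + intro Hf. destruct (enum_surj f) as [n <-].
      destruct (classic (DT (fun x => pos (stage n) x \/ x = enum n) (neg (stage n)))) as [Hd|Hd].
      * right; exists (S n); simpl; right; auto.
      * left; exists (S n); simpl; right; auto.
  - intro Hd. apply derives_DT in Hd.
    2:{ intros f [n Hn]; apply (proj1 (stage_L n)); auto. }
    destruct Hd as (g & d & Hg & Hd & T).
    destruct (bound_list (fun n f => pos (stage n) f)) with g as [N1 HN1]; auto.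
    { intros n m f Hnm; apply (proj1 (stage_mono n m Hnm)). }
    destruct (bound_list (fun n f => neg (stage n) f)) with d as [N2 HN2]; auto.
    { intros n m f Hnm; apply (proj2 (stage_mono n m Hnm)). }
    apply (stage_cons (max N1 N2)). exists g, d; split; [|split]; auto.
    + intros x Hx; apply (proj1 (stage_mono N1 (max N1 N2) ltac:(lia))); auto.
    + intros x Hx; apply (proj2 (stage_mono N2 (max N1 N2) ltac:(lia))); auto.
Qed.

End Lind.

Lemma lindenbaum_ex (G D : form -> Prop) : (forall f, G f -> L f) -> (forall f, D f -> L f) ->
  ~ DT G D -> exists Q, prime_type M Lam Q /\ (forall f, G f -> pos Q f) /\ (forall f, D f -> neg Q f).
Proof. intros. exists (limT G D). apply lindenbaum; auto. Qed.


Definition nextT (P : ptype) : ptype :=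
  mkT (fun a => pos P (Next a)) (fun a => neg P (Next a)).

Lemma Lall_map_next g : Lall g -> Lall (map Next g).
Proof. intros H x Hx. apply in_map_iff in Hx. destruct Hx as [y [<- Hy]]. simpl; auto. Qed.

Lemma thm_next_mono G a b : Lam (Imp a b) -> Thm G (Next a) -> Thm G (Next b).
Proof. intros H Ha. pose proof (lam_L _ H) as [La Lb].
  apply T_mp with (Next a); auto. apply T_lam.
  apply lam_mp with (Next (Imp a b)). apply lam_nec; auto. apply axN4; auto. Qed.

Lemma next_bigAnd g : Lall g -> Thm (map Next g) (Next (bigAnd g)).
Proof.
  induction g as [|y r IH]; intro H; simpl.
  - apply T_lam, lam_nec, lam_top.
  - assert (Lr : Lall r) by (intros x Hx; apply H; right; auto).
    assert (Ly : L y) by (apply H; left; auto).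
    apply lam_app with (And (Next y) (Next (bigAnd r))).
    apply axN2; auto. apply L_bigAnd; auto.
    apply thm_andI. apply Lall_map_next with (g := y :: r); auto.
    apply T_hyp; left; auto.
    apply thm_weak with (map Next r); auto. intros x Hx; right; auto.
Qed.

Lemma next_bigOr d : forall G, Lall G -> Lall d -> Thm G (Next (bigOr d)) -> Thm G (bigOr (map Next d)).
Proof.
  induction d as [|y r IH]; intros G HG Hd H; simpl in *.
  - apply lam_app with (Next Bot); auto. apply axN1.
  - assert (Lr : Lall r) by (intros x Hx; apply Hd; right; auto).
    assert (Ly : L y) by (apply Hd; left; auto).
    assert (Lm : L (bigOr (map Next r))) by (apply L_bigOr, Lall_map_next; auto).
    apply thm_orE with (Next y) (Next (bigOr r)); auto.
    + apply lam_app with (Next (Or y (bigOr r))); auto. apply axN3; auto. apply L_bigOr; auto.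
    + apply thm_orI1; auto. apply Lall_cons; auto. apply T_hyp; left; auto.
    + apply thm_orI2; auto. apply Lall_cons; auto. simpl; apply L_bigOr; auto.
      apply IH; auto. apply Lall_cons; auto. simpl; apply L_bigOr; auto. apply T_hyp; left; auto.
Qed.

Lemma nextT_prime P : prime_type M Lam P -> prime_type M Lam (nextT P).
Proof.
  intro HP. split.
  - intro f. exact (proj1 HP (Next f)).
  - intros (g & d & Hg & Hd & H). simpl in Hg, Hd.
    assert (Lg : Lall g) by (intros x Hx; exact (pos_L P HP _ (Hg x Hx))).
    assert (Ld : Lall d) by (intros x Hx; exact (neg_L P HP _ (Hd x Hx))).
    apply (contra P HP (map Next g) (map Next d)).
    + intros x Hx. apply in_map_iff in Hx. destruct Hx as [y [<- Hy]]; auto.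
    + intros x Hx. apply in_map_iff in Hx. destruct Hx as [y [<- Hy]]; auto.
    + apply next_bigOr; auto. apply Lall_map_next; auto.
      apply thm_next_mono with (bigAnd g); auto. apply next_bigAnd; auto.
Qed.

Lemma dia_lemma a : M MDia = true -> L a -> Lam (Imp (Dia a) (Or a (Next (Dia a)))).
Proof.
  intros HD La. set (phi := Or a (Next (Dia a))).
  assert (LD : L (Dia a)) by (simpl; auto).
  assert (Lphi : L phi) by (simpl; auto).
  assert (Ls : forall f, L f -> Lall [f]) by (intros; apply Lall_cons; auto; apply Lall_nil).
  assert (H1 : Lam (Imp a phi)).
  { apply thm_nil, deduction; auto. apply Lall_nil. apply thm_orI1; auto. apply T_hyp; left; auto. }
  assert (H2 : Lam (Imp (Dia a) (Dia phi))) by (apply lam_dia_mono; auto).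
  assert (Haa : Lam (Imp a (Dia a))).
  { apply thm_nil, deduction; auto. apply Lall_nil.
    apply lam_app with phi. apply axDia; auto. apply thm_orI1; auto. apply T_hyp; left; auto. }
  assert (Hnd : Lam (Imp (Next (Dia a)) (Dia a))).
  { apply thm_nil, deduction; auto. apply Lall_nil.
    apply lam_app with phi. apply axDia; auto. apply thm_orI2; auto. apply T_hyp; left; auto. }
  assert (H3 : Lam (Imp (Next phi) phi)).
  { apply thm_nil, deduction; auto. apply Lall_nil.
    apply thm_orE with (Next a) (Next (Next (Dia a))); auto.
    - apply lam_app with (Next phi). apply axN3; auto. apply T_hyp; left; auto.
    - apply thm_orI2; auto. apply Lall_cons; auto. apply thm_next_mono with a; auto. apply T_hyp; left; auto.
    - apply thm_orI2; auto. apply Lall_cons; auto. apply thm_next_mono with (Next (Dia a)); auto.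
      apply T_hyp; left; auto. }
  assert (H4 : Lam (Imp (Dia phi) phi)) by (apply lam_dia_ind; auto).
  apply thm_nil, deduction; auto. apply Lall_nil.
  apply lam_app with (Dia phi); auto. apply lam_app with (Dia a); auto. apply T_hyp; left; auto.
Qed.

Lemma lam_andE1 x y : Lam (And x y) -> Lam x.
Proof. intro H. pose proof (lam_L _ H) as [? ?]. apply lam_mp with (And x y); auto. apply axAndE1; auto. Qed.
Lemma lam_andE2 x y : Lam (And x y) -> Lam y.
Proof. intro H. pose proof (lam_L _ H) as [? ?]. apply lam_mp with (And x y); auto. apply axAndE2; auto. Qed.

Lemma all_pos_iff P a : prime_type M Lam P -> (pos P (All a) <-> pos P (Next (All a))).
Proof.
  intro HP. split; intro H.
  - pose proof (pos_L P HP _ H) as [HA La].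
    apply (pos_of_thm P HP [All a]); [inl | simpl; auto |].
    apply lam_app with (All a). eapply lam_andE1, axAllIff; auto. apply T_hyp; left; auto.
  - pose proof (pos_L P HP _ H) as [HA La].
    apply (pos_of_thm P HP [Next (All a)]); [inl | simpl; auto |].
    apply lam_app with (Next (All a)). eapply lam_andE2, axAllIff; auto. apply T_hyp; left; auto.
Qed.

Lemma sensible_next P : prime_type M Lam P -> sensible P (nextT P).
Proof.
  intro HP. split; [simpl; auto|]. split; [simpl; auto|]. split; [|split; [|split]].
  - intros a H. pose proof (pos_L P HP _ H) as [HD La]. simpl.
    apply (proj1 (proj2 (proj2 (proj2 (proj2 (prime_tc P HP)))))).
    apply (pos_of_thm P HP [Dia a]); [inl | simpl; auto |].
    apply lam_app with (Dia a). apply dia_lemma; auto. apply T_hyp; left; auto.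
  - intros a H. pose proof (neg_L P HP _ H) as [HD La]. simpl.
    destruct (cover P HP (Next (Dia a))) as [Hp|Hn]; [simpl; auto| |auto].
    exfalso. apply (contra1 P HP [Next (Dia a)] (Dia a)); [inl | auto |].
    apply lam_app with (Or a (Next (Dia a))). apply axDia; auto.
    apply thm_orI2; auto. apply Lall_cons; [simpl; auto| apply Lall_nil]. apply T_hyp; left; auto.
  - intro a. simpl. apply all_pos_iff; auto.
  - intro a. simpl. split; intro H.
    + destruct (cover P HP (Next (All a))) as [Hp|Hn]; [exact (neg_L P HP _ H)| |auto].
      exfalso. apply (disj P HP (All a)); auto. apply all_pos_iff; auto.
    + destruct (cover P HP (All a)) as [Hp|Hn]; [exact (neg_L P HP _ H)| |auto].
      exfalso. apply (disj P HP (Next (All a))); auto. apply all_pos_iff; auto.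
Qed.

Lemma next_unique P Q : prime_type M Lam P -> prime_type M Lam Q -> sensible P Q ->
  (forall f, pos Q f <-> pos P (Next f)) /\ (forall f, neg Q f <-> neg P (Next f)).
Proof.
  intros HP HQ [S1 [S2 _]]. split; intro f; split; auto; intro H.
  - destruct (cover P HP (Next f)) as [Hp|Hn]; [exact (pos_L Q HQ _ H)|auto|].
    exfalso; apply (disj Q HQ f); auto.
  - destruct (cover P HP (Next f)) as [Hp|Hn]; [exact (neg_L Q HQ _ H)| |auto].
    exfalso; apply (disj Q HQ f); auto.
Qed.

Lemma witness P a b : prime_type M Lam P -> neg P (Imp a b) ->
  exists Q, prime_type M Lam Q /\ le_T P Q /\ pos Q a /\ neg Q b.
Proof.
  intros HP H. pose proof (neg_L P HP _ H) as [La Lb].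
  destruct (lindenbaum_ex (fun x => pos P x \/ x = a) (fun x => x = b)) as [Q [HQ [H1 H2]]].
  - intros f [Hf| ->]; auto. exact (pos_L P HP _ Hf).
  - intros f ->; auto.
  - intros (g & d & Hg & Hd & T).
    destruct (split_list (pos P) a g Hg) as [g0 [Hg0 Ig]].
    assert (Lg0 : Lall g0) by (apply Lall_pos with P; auto).
    assert (Lg : Lall g) by (intros x Hx; apply Ig in Hx; destruct Hx as [<-|Hx]; auto).
    apply (contra1 P HP g0 (Imp a b)); auto.
    apply deduction; auto. apply thm_weak with g; auto.
    apply thm_bigOr_elim with d; auto.
    intros x Hx. rewrite (Hd x Hx). apply T_hyp; left; auto.
  - exists Q; split; [auto|split; [split|split; auto]].
    + intros f Hf; auto.
    + intros f Hf. destruct (cover P HP f) as [Hp|Hn]; [exact (neg_L Q HQ _ Hf)| |auto].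
      exfalso; apply (disj Q HQ f); auto.
Qed.

End ITL.

Lemma ptype_ext (P Q : ptype) : (forall f, pos P f <-> pos Q f) -> (forall f, neg P f <-> neg Q f) -> P = Q.
Proof.
  destruct P as [p n], Q as [p' n']; simpl; intros H1 H2.
  f_equal; apply functional_extensionality; intro; apply propositional_extensionality; auto.
Qed.

Lemma Wc_ext M Lam (P Q : Wc M Lam) : proj1_sig P = proj1_sig Q -> P = Q.
Proof. destruct P as [P HP], Q as [Q HQ]; simpl; intro; subst; f_equal; apply proof_irrelevance. Qed.

Theorem proposition5p6 (M : modality -> bool) (Lam : form -> Prop)
  (HLam : admissible M Lam) :
  (* <=_c is a partial order on W_c *)
  ((forall P : Wc M Lam, le_c P P) /\
   (forall P Q R : Wc M Lam, le_c P Q -> le_c Q R -> le_c P R) /\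
   (forall P Q : Wc M Lam, le_c P Q -> le_c Q P -> P = Q)) /\
  (* each label satisfies the type conditions *)
  (forall P : Wc M Lam, type_conditions (ell_c P)) /\
  (* labels are monotone *)
  (forall P Q : Wc M Lam, le_c P Q -> le_T (ell_c P) (ell_c Q)) /\
  (* witnesses for refuted implications *)
  (forall (P : Wc M Lam) a b, neg (ell_c P) (Imp a b) ->
     exists Q : Wc M Lam, le_c P Q /\ pos (ell_c Q) a /\ neg (ell_c Q) b) /\
  (* S_c is (the graph of) a monotone function W_c -> W_c with sensible pairs *)
  (exists s : Wc M Lam -> Wc M Lam,
     (forall P Q : Wc M Lam, S_c P Q <-> Q = s P) /\
     (forall P Q : Wc M Lam, le_c P Q -> le_c (s P) (s Q)) /\
     (forall P : Wc M Lam, sensible (ell_c P) (ell_c (s P)))).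
Proof.
  split; [|split; [|split; [|split]]].
  - split; [|split].
    + intros P; split; auto.
    + intros P Q R [H1 H2] [H3 H4]; split; auto.
    + intros P Q [H1 H2] [H3 H4]. apply (Wc_ext M Lam); apply ptype_ext; split; auto.
  - intros [P HP]; apply (prime_tc M Lam HLam P HP).
  - auto.
  - intros [P HP] a b H. destruct (witness M Lam HLam P a b HP H) as [Q [HQ [H1 [H2 H3]]]].
    exists (exist _ Q HQ); auto.
  - exists (fun P => exist _ (nextT (proj1_sig P)) (nextT_prime M Lam HLam _ (proj2_sig P))).
    split; [|split].
    + intros [P HP] [Q HQ]; unfold S_c; simpl; split.
      * intro H. apply (Wc_ext M Lam); simpl. destruct (next_unique M Lam HLam P Q HP HQ H) as [E1 E2].
        apply ptype_ext; auto.
      * intro E. injection E as E. subst Q. apply (sensible_next M Lam HLam); auto.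
    + intros [P HP] [Q HQ] [H1 H2]; split; simpl; auto.
    + intros [P HP]; apply (sensible_next M Lam HLam); auto.
Qed.
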